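(* Let $\mathcal{H}$ be a complex Hilbert space, $A\in\mathcal{B}(\mathcal{H})$ positive and $S\in\mathcal{B}_A(\mathcal{H})$. Then $$\max\left\{\omega_A\left(\Re_A(S)+iS^{\sharp_A}S\right),\ \omega_A\left(\Im_A(S)+iS^{\sharp_A}S\right)\right\}\le d\omega_A(S)$$ and $$d\omega_A(S)\le\min\left\{\sqrt{\omega_A^2\left(\Re_A(S)+iS^{\sharp_A}S\right)+\|\Im_A(S)\|_A^2},\ \sqrt{\omega_A^2\left(\Im_A(S)+iS^{\sharp_A}S\right)+\|\Re_A(S)\|_A^2}\right\}.$$
   Context: $\mathcal{B}(\mathcal{H})$ denotes the bounded linear operators on $\mathcal{H}$. For positive $A$, $\langle x,z\rangle_A=\langle Ax,z\rangle$ and $\|z\|_A=\|A^{1/2}z\|$. $\mathcal{B}_A(\mathcal{H})$ is the set of $S\in\mathcal{B}(\mathcal{H})$ for which some $R\in\mathcal{B}(\mathcal{H})$ satisfies $AR=S^*A$; for such $S$, $S^{\sharp_A}=A^{\dagger}S^*A$ with $A^\dagger$ the Moore–Penrose inverse of $A$. $\Re_A(S)=\frac{S+S^{\sharp_A}}{2}$ and $\Im_A(S)=\frac{S-S^{\sharp_A}}{2i}$. For operators $T$ bounded with respect to $\|\cdot\|_A$: $\|T\|_A=\sup_{\|z\|_A=1}\|Tz\|_A$, $\omega_A(T)=\sup_{\|z\|_A=1}|\langle Tz,z\rangle_A|$, and $d\omega_A(T)=\sup_{\|z\|_A=1}(|\langle Tz,z\rangle_A|^2+\|Tz\|_A^4)^{1/2}$.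 *)

(* Defs.v *)
From HB Require Import structures.
From mathcomp Require Import all_boot all_order all_algebra.
From mathcomp Require Import all_classical.
From mathcomp Require Import reals constructive_ereal ereal.
From mathcomp Require Import complex.
Set Implicit Arguments. Unset Strict Implicit. Unset Printing Implicit Defensive.
Import Order.TTheory GRing.Theory Num.Theory.
Local Open Scope ring_scope.
Local Open Scope classical_set_scope.

Section Hilbert.
Variable R : realType.
Local Notation C := R[i].
Variable V : lmodType C.
Variable ip : V -> V -> C.

Definition cabs (z : C) : R := Num.sqrt (complex.Re z ^+ 2 + complex.Im z ^+ 2).

Definition hnorm (x : V) : R := Num.sqrt (complex.Re (ip x x)).

Definition is_complex_hilbert : Prop :=
  [/\ (forall (a : C) (x y z : V), ip (a *: x + y) z = a * ip x z + ip y z),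
      (forall x y : V, ip y x = conjc (ip x y)),
      (forall x : V, 0 <= ip x x),
      (forall x : V, ip x x = 0 -> x = 0) &
      (forall u : nat -> V,
         (forall e : R, 0 < e -> exists N, forall m n, (N <= m)%N -> (N <= n)%N ->
             hnorm (u m - u n) < e) ->
         exists l : V, forall e : R, 0 < e -> exists N, forall n, (N <= n)%N ->
             hnorm (u n - l) < e)].

Definition is_bounded_op (T : V -> V) : Prop :=
  (forall (a : C) (x y : V), T (a *: x + y) = a *: T x + T y) /\
  (exists M : R, forall x, hnorm (T x) <= M * hnorm x).

Definition is_positive_op (A : V -> V) : Prop :=
  is_bounded_op A /\ forall x, 0 <= ip (A x) x.

Definition adjoint (T : V -> V) : V -> V :=
  fun y => xget 0 [set w | forall x, ip (T x) y = ip x w].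

(* Moore–Penrose inverse of A: for y in R(A) (+) R(A)^perp, A^dag y is the
   unique x in N(A)^perp with A x = P_{closure R(A)} y, i.e. with
   x in N(A)^perp and y - A x in R(A)^perp. *)
Definition mp_inverse (A : V -> V) : V -> V :=
  fun y => xget 0 [set x | (forall k, A k = 0 -> ip x k = 0) /\
                           (forall v, ip (y - A x) (A v) = 0)].

Definition in_BA (A S : V -> V) : Prop :=
  is_bounded_op S /\
  exists Rop : V -> V, is_bounded_op Rop /\ forall x, A (Rop x) = adjoint S (A x).

Definition asharp (A S : V -> V) : V -> V :=
  fun z => mp_inverse A (adjoint S (A z)).

Definition ReA (A S : V -> V) : V -> V :=
  fun z => 2^-1 *: (S z + asharp A S z).
Definition ImA (A S : V -> V) : V -> V :=
  fun z => (2 * ('i)%C)^-1 *: (S z - asharp A S z).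

(* <x,z>_A = <Ax,z> ;  ||z||_A = ||A^{1/2} z|| = sqrt <Az,z> *)
Definition ipA (A : V -> V) (x z : V) : C := ip (A x) z.
Definition normA (A : V -> V) (z : V) : R := Num.sqrt (complex.Re (ip (A z) z)).

(* supremum over the A-unit sphere, of nonnegative quantities (empty sup = 0) *)
Definition supA (A : V -> V) (f : V -> R) : \bar R :=
  ereal_sup ([set 0%E] `|` [set (f z)%:E | z in [set z | normA A z = 1]]).

Definition opnormA (A T : V -> V) : \bar R := supA A (fun z => normA A (T z)).
Definition numradA (A T : V -> V) : \bar R := supA A (fun z => cabs (ipA A (T z) z)).
Definition dnumradA (A T : V -> V) : \bar R :=
  supA A (fun z => Num.sqrt (cabs (ipA A (T z) z) ^+ 2 + normA A (T z) ^+ 4)).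

End Hilbert.

Definition esqrt (R : realType) (x : \bar R) : \bar R :=
  match x with
  | EFin r => (Num.sqrt r)%:E
  | +oo%E => +oo%E
  | -oo%E => 0%E
  end.

(* Main.v *)
Require Import Defs.
From HB Require Import structures.
From mathcomp Require Import all_boot all_order all_algebra.
From mathcomp Require Import all_classical.
From mathcomp Require Import reals constructive_ereal ereal.
From mathcomp Require Import complex.
From mathcomp Require Import ring lra.
Import Order.TTheory GRing.Theory Num.Theory.
Local Open Scope ring_scope.
Local Notation "x %:C" := (real_complex _ x) : ring_scope.
Local Notation "x +i* y" := (Complex x y) : ring_scope.

Notation CRe := complex.Re.
Notation CIm := complex.Im.

Section Aux.
Variable R : realType.
Local Notation C := R[i].

Lemma disc (a b c : R) : 0 <= c -> (forall t, 0 <= a + 2 * b * t + c * t ^+ 2) -> b ^+ 2 <= a * c.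
Proof.
move=> c0 H.
have a0 : 0 <= a by have := H 0; rewrite mulr0 expr0n /= mulr0 !addr0.
have [cz|cp] := eqVneq c 0.
  have [bz|bn] := eqVneq b 0; first by rewrite bz expr0n /= mulr_ge0.
  have e : 2 * b * (- (a + 1) / (2 * b)) = - (a + 1) by field; rewrite bn.
  have := H (- (a + 1) / (2 * b)); rewrite cz mul0r addr0 e; lra.
have cp' : 0 < c by rewrite lt0r cp.
have := H (- b / c).
have e : (a + 2 * b * (- b / c) + c * (- b / c) ^+ 2) * c = a * c - b ^+ 2.
  by field.
rewrite -(ler_pM2r cp') mul0r e; lra.
Qed.

Lemma two : (2 : C) = (2 +i* 0)%C.
Proof. by rewrite -[2]/(1 + 1 : C); simpc. Qed.
Lemma inv2 : (2^-1 : C) = (2^-1 +i* 0)%C.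
Proof.
have h : (2 : C) * (2^-1 +i* 0)%C = 1.
  rewrite two; simpc. by rewrite divff // pnatr_eq0.
by rewrite -(mulKf (_ : (2:C) != 0) (2^-1 +i* 0)%C) ?h ?mulr1 // pnatr_eq0.
Qed.
Lemma inv2i : ((2 * 'i%C)^-1 : C) = (0 +i* (- 2^-1))%C.
Proof.
have nz : (2 * 'i%C : C) != 0 by rewrite mulf_neq0 ?pnatr_eq0 // neq0Ci.
have h : (2 * 'i%C : C) * (0 +i* (- 2^-1))%C = 1.
  rewrite two; simpc. by rewrite divff // pnatr_eq0.
by rewrite -(mulKf nz (0 +i* (- 2^-1))%C) h mulr1.
Qed.

Lemma complexE2 (z : C) : z = (CRe z +i* CIm z)%C.
Proof. by case: z. Qed.

Lemma ge0_real (z : C) : 0 <= z -> z = (CRe z)%:C /\ 0 <= CRe z.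
Proof. by case: z => a b; rewrite lecE /= => /andP[/eqP -> ->]. Qed.

Local Open Scope complex_scope.
Lemma conjD (x y : C) : conjc (x + y) = conjc x + conjc y.
Proof. by case: x => ? ?; case: y => ? ?; simpc. Qed.
Lemma conjM (x y : C) : conjc (x * y) = conjc x * conjc y.
Proof. case: x => ? ?; case: y => ? ?; simpc; congr (_ +i* _); ring. Qed.
Lemma conjN (x : C) : conjc (- x) = - conjc x.
Proof. by case: x => ? ?; simpc. Qed.
Lemma conj1 : conjc (1 : C) = 1.
Proof. by rewrite /conjc /= oppr0. Qed.
Lemma conj0 : conjc (0 : C) = 0.
Proof. by rewrite /conjc /= oppr0. Qed.
Lemma conjK (x : C) : conjc (conjc x) = x.
Proof. by case: x => ? ?; simpc. Qed.
End Aux.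

Section Form.
Variable R : realType.
Local Notation C := R[i].
Variable V : lmodType C.
Variable B : V -> V -> C.
Hypothesis BL : forall (a : C) (x y z : V), B (a *: x + y) z = a * B x z + B y z.
Hypothesis BC : forall x y, B y x = conjc (B x y).
Hypothesis BP : forall x, 0 <= B x x.

Lemma B0l z : B 0 z = 0.
Proof.
have := BL 1 0 0 z; rewrite scale1r addr0 mul1r.
by move/(congr1 (fun w => w - B 0 z)); rewrite subrr addrK => /esym.
Qed.
Lemma BDl x y z : B (x + y) z = B x z + B y z.
Proof. by rewrite -[x]scale1r BL mul1r scale1r. Qed.
Lemma BZl a x z : B (a *: x) z = a * B x z.
Proof. by rewrite -[a *: x]addr0 BL B0l addr0. Qed.
Lemma BNl x z : B (- x) z = - B x z.
Proof. by rewrite -scaleN1r BZl mulN1r. Qed.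
Lemma BBl x y z : B (x - y) z = B x z - B y z.
Proof. by rewrite BDl BNl. Qed.
Lemma BDr x y z : B z (x + y) = B z x + B z y.
Proof. by rewrite BC BDl conjD -!BC. Qed.
Lemma BZr a x z : B z (a *: x) = conjc a * B z x.
Proof. by rewrite BC BZl conjM -!BC. Qed.
Lemma BNr x z : B z (- x) = - B z x.
Proof. by rewrite -scaleN1r BZr conjN conj1 mulN1r. Qed.
Lemma BBr x y z : B z (x - y) = B z x - B z y.
Proof. by rewrite BDr BNr. Qed.
Lemma B0r z : B z 0 = 0.
Proof. by rewrite -(scale0r 0) BZr conj0 mul0r. Qed.

Lemma BReal x : B x x = (CRe (B x x))%:C.
Proof. by case: (@ge0_real _ _ (BP x)). Qed.
Lemma BRe_ge0 x : 0 <= CRe (B x x).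
Proof. by case: (@ge0_real _ _ (BP x)). Qed.

Lemma BRe_CS x y : CRe (B x y) ^+ 2 <= CRe (B x x) * CRe (B y y).
Proof.
apply: disc; first exact: BRe_ge0.
move=> t.
have := BRe_ge0 (x + t%:C *: y).
rewrite !BDl !BDr !BZl !BZr (BC x y) (BReal x) (BReal y).
move: (CRe (B x x)) (CRe (B y y)) (B x y) => a c [b1 b2] /=.
simpc => /=.
by have -> : a + 2 * b1 * t + c * t ^+ 2 = a + t * b1 + (t * b1 + t * (t * c)) by ring.
Qed.

End Form.

Lemma small_inv (R : realType) (e : R) : 0 < e ->
  exists N, forall n, (N <= n)%N -> (n.+1%:R)^-1 < e.
Proof.
move=> e0; have ei : 0 <= e^-1 by rewrite invr_ge0 ltW.
exists (Num.Def.archi_bound e^-1) => n Nn.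
have h := archi_boundP ei.
have h2 : e^-1 < n.+1%:R.
  apply: (lt_le_trans h); rewrite ler_nat; exact: (leq_trans Nn).
rewrite -(invrK e) ltf_pV2 // ?posrE ?ltr0Sn // ?invr_gt0 //.
Qed.

Section SupA.
Variable R : realType.
Variable V : lmodType R[i].
Variable ip : V -> V -> R[i].
Variable A : V -> V.
Local Open Scope ereal_scope.

Lemma supA_ub (f : V -> R) z : normA ip A z = 1%R -> (f z)%:E <= supA ip A f.
Proof. by move=> hz; apply: ereal_sup_ubound; right; exists z. Qed.

Lemma supA_ge0 (f : V -> R) : 0 <= supA ip A f.
Proof. by apply: ereal_sup_ubound; left. Qed.

Lemma supA_le (f : V -> R) (M : \bar R) : 0 <= M ->
  (forall z, normA ip A z = 1%R -> (f z)%:E <= M) -> supA ip A f <= M.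
Proof.
move=> M0 H; apply: ge_ereal_sup => x [-> // | [z hz <-]].
exact: H.
Qed.

Lemma esq_bound (a b : \bar R) (x y r : R) : (0 <= x)%R -> (0 <= y)%R ->
  x%:E <= a -> y%:E <= b -> (r <= Num.sqrt (x ^+ 2 + y ^+ 2))%R ->
  r%:E <= esqrt (a * a + b * b).
Proof.
move=> x0 y0; case: a => [a'| |] ha; case: b => [b'| |] hb hr //=.
- rewrite lee_fin in ha; rewrite lee_fin in hb.
  rewrite lee_fin; apply: (le_trans hr); rewrite ler_sqrt; last first.
    by rewrite addr_ge0 // mulr_ge0 // ?(le_trans _ ha) // (le_trans _ hb).
  rewrite !expr2; apply: lerD; apply: ler_pM => //.
- exact: leey.
- exact: leey.
- exact: leey.
Qed.

Lemma esqrt_ge0 (x : \bar R) : 0 <= esqrt x.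
Proof. by case: x => //= r; rewrite lee_fin sqrtr_ge0. Qed.

End SupA.

Section Hilb.
Variable R : realType.
Local Notation C := R[i].
Variable V : lmodType C.
Variable ip : V -> V -> C.
Hypothesis ipL : forall (a : C) (x y z : V), ip (a *: x + y) z = a * ip x z + ip y z.
Hypothesis ipC : forall x y, ip y x = conjc (ip x y).
Hypothesis ipP : forall x, 0 <= ip x x.
Hypothesis ipD : forall x, ip x x = 0 -> x = 0.
Hypothesis ipComplete : forall u : nat -> V,
         (forall e : R, 0 < e -> exists N, forall m n, (N <= m)%N -> (N <= n)%N ->
             hnorm ip (u m - u n) < e) ->
         exists l : V, forall e : R, 0 < e -> exists N, forall n, (N <= n)%N ->
             hnorm ip (u n - l) < e.

Let ipDl := @BDl R V ip ipL.
Let ipZl := @BZl R V ip ipL.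
Let ipNl := @BNl R V ip ipL.
Let ipBl := @BBl R V ip ipL.
Let ip0l := @B0l R V ip ipL.
Let ipDr := @BDr R V ip ipL ipC.
Let ipZr := @BZr R V ip ipL ipC.
Let ipNr := @BNr R V ip ipL ipC.
Let ipBr := @BBr R V ip ipL ipC.
Let ip0r := @B0r R V ip ipL ipC.
Let ipReal := @BReal R V ip ipP.
Let ipCS := @BRe_CS R V ip ipL ipC ipP.
Local Notation n2 x := (CRe (ip x x)).
Local Notation hn := (hnorm ip).

Lemma n2_ge0 x : 0 <= n2 x. Proof. exact: (@BRe_ge0 R V ip ipP). Qed.
Lemma hn_ge0 x : 0 <= hn x. Proof. exact: sqrtr_ge0. Qed.
Lemma hn_sqr x : hn x ^+ 2 = n2 x. Proof. by rewrite sqr_sqrtr // n2_ge0. Qed.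

Lemma hn_lt x e : 0 < e -> (hn x < e) = (n2 x < e ^+ 2).
Proof.
move=> e0; rewrite -[in RHS](ltr_sqrt _ (exprn_gt0 2 e0)) sqrtr_sqr gtr0_norm //.
Qed.

Lemma n2_expand a b (t : R) :
  n2 (a + t%:C *: b) = n2 a + 2 * t * CRe (ip a b) + t ^+ 2 * n2 b.
Proof.
rewrite ipDl !ipDr !ipZl !ipZr (ipC a b) (ipReal a) (ipReal b).
move: (CRe (ip a a)) (CRe (ip b b)) (ip a b) => p q [b1 b2] /=.
simpc => /=; ring.
Qed.

Lemma n2D a b : n2 (a + b) = n2 a + 2 * CRe (ip a b) + n2 b.
Proof. by have := n2_expand a b 1; rewrite scale1r mulr1 expr1n mul1r. Qed.

Lemma hn_triangle a b : hn (a + b) <= hn a + hn b.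
Proof.
have h1 := hn_ge0 a; have h2 := hn_ge0 b; have h3 := hn_ge0 (a + b).
have CS := ipCS a b.
rewrite -(ler_pXn2r (ltn0Sn 1)) ?nnegrE ?addr_ge0 //.
rewrite sqrrD !hn_sqr n2D.
have : CRe (ip a b) <= hn a * hn b.
  have : CRe (ip a b) ^+ 2 <= (hn a * hn b) ^+ 2 by rewrite exprMn !hn_sqr.
  have hp : 0 <= hn a * hn b by rewrite mulr_ge0.
  move=> h; nra.
lra.
Qed.


Lemma zmod_id1 (v w a : V) : v - (w + w - a) = v - w - (w - a).
Proof.
by rewrite opprB opprD !addrA [in RHS]opprB addrA (addrAC v (-w) a).
Qed.

Lemma zmod_id2 (w a : V) : (w + w - a) - a = (w - a) + (w - a).
Proof. by rewrite addrACA -!addrA (addrCA w (-a)). Qed.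

Lemma proj (M : set V) : M 0 -> (forall (a : C) x y, M x -> M y -> M (a *: x + y)) ->
  (forall l, (forall e, 0 < e -> exists m, M m /\ hn (m - l) < e) -> M l) ->
  forall v, exists m, M m /\ forall k, M k -> ip (v - m) k = 0.
Proof.
move=> M0 Mlin Mcl v.
have MZ : forall a x, M x -> M (a *: x).
  by move=> a x Mx; rewrite -[a *: x]addr0; apply: Mlin.
have MD : forall x y, M x -> M y -> M (x + y).
  by move=> x y Mx My; rewrite -[x]scale1r; apply: Mlin.
pose D := [set hn (v - m) | m in M]%classic.
have Dne : (D !=set0)%classic by exists (hn (v - 0)), 0.
have Dlb : lbound D 0 by move=> _ [m _ <-]; exact: hn_ge0.
have Dinf : has_inf D by split => //; exists 0.
pose dh := inf D.
have dlb : forall m, M m -> dh <= hn (v - m).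
  by move=> m Mm; apply: (ge_inf Dinf.2); exists m.
have dh0 : 0 <= dh by apply: lb_le_inf.
pose eps (n : nat) : R := (n.+1%:R)^-1.
have eps0 n : 0 < eps n by rewrite /eps invr_gt0 ltr0Sn.
have eps1 n : eps n <= 1 by rewrite /eps invf_le1 ?ltr0Sn // ler1n.
have adh : forall n : nat, exists m, M m /\ hn (v - m) < dh + eps n.
  move=> n; have [_ [m Mm <-] h] := inf_adherent (eps0 n) Dinf.
  by exists m.
case: (choice adh) => u Hu.
have para : forall n m, n2 (u m - u n) <= 2 * (2 * dh + 1) * (eps n + eps m).
  move=> n m.
  pose w := (2^-1 : C) *: (u n + u m).
  have Mw : M w by apply: MZ; apply: MD; [exact: (Hu n).1 | exact: (Hu m).1].
  pose z := v - w; pose h := w - u n.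
  have ww : w + w = u n + u m.
    rewrite /w -scalerDl.
    have -> : (2^-1 + 2^-1 : C) = 1.
      by field.
    by rewrite scale1r.
  have um : u m = w + w - u n by rewrite ww addrC addKr.
  have e1 : v - u n = z + h by rewrite /z /h addrA subrK.
  have e2 : v - u m = z - h by rewrite um zmod_id1.
  have e3 : u m - u n = h + h by rewrite um zmod_id2.
  have p1 : n2 (z - h) = n2 z - 2 * CRe (ip z h) + n2 h.
    rewrite n2D ipNr ipNl ipNr opprK; simpc.
    by case: (ip z h) => ? ? /=; ring.
  have p2 : n2 (h + h) = 4 * n2 h by rewrite n2D (ipReal h) /=; ring.
  have b1 : n2 (v - u n) <= (dh + eps n) ^+ 2.
    rewrite -hn_sqr; have := (Hu n).2; have := hn_ge0 (v - u n); nra.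
  have b2 : n2 (v - u m) <= (dh + eps m) ^+ 2.
    rewrite -hn_sqr; have := (Hu m).2; have := hn_ge0 (v - u m); nra.
  have b3 : dh ^+ 2 <= n2 z.
    rewrite -hn_sqr; have := dlb w Mw; rewrite -/z; nra.
  move: b1 b2; rewrite e1 e2 e3 p2 n2D p1 => b1 b2.
  have := eps1 n; have := eps1 m; have := eps0 n; have := eps0 m.
  nra.
have cauchy : forall e : R, 0 < e -> exists N, forall m n, (N <= m)%N -> (N <= n)%N ->
             hn (u m - u n) < e.
  move=> e e0.
  have K0 : 0 < 4 * (2 * dh + 1) by lra.
  have [N HN] := @small_inv R _ (divr_gt0 (exprn_gt0 2 e0) K0).
  exists N => m n Nm Nn; rewrite hn_lt //.
  have h1 := HN _ Nm; have h2 := HN _ Nn.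
  have := para n m; rewrite /eps.
  move: h1 h2; set a := (m.+1%:R)^-1; set b := (n.+1%:R)^-1.
  set E := e ^+ 2 / (4 * (2 * dh + 1)).
  have EE : E * (4 * (2 * dh + 1)) = e ^+ 2 by rewrite /E mulfVK // gt_eqF.
  nra.
have [l Hl] := ipComplete _ cauchy.
have Ml : M l.
  apply: Mcl => e e0; have [N HN] := Hl e e0.
  by exists (u N); split; [exact: (Hu N).1 | exact: HN].
exists l; split => //.
have hl : hn (v - l) <= dh.
  apply/ler_addgt0Pr => e e0.
  have e2 : 0 < e / 2 by rewrite divr_gt0.
  have [N1 H1] := Hl _ e2.
  have [N2 H2] := @small_inv R _ e2.
  pose n := maxn N1 N2.
  have := H1 n (leq_maxl _ _); have := H2 n (leq_maxr _ _); have := (Hu n).2.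
  have := hn_triangle (v - u n) (u n - l); rewrite addrA subrK.
  rewrite /eps => T1 T2 T3 T4.
  apply: (le_trans T1); move: T2 T3 T4.
  move: (hn (v - u n)) (hn (u n - l)) (n.+1%:R^-1 : R) => a b c.
  move=> A1 A2 A3.
  have X1 : a + b < dh + c + e / 2 by lra.
  have X2 : c + e / 2 < e by lra.
  lra.
have orth : forall k, M k -> CRe (ip (v - l) k) = 0.
  move=> k Mk.
  have H : forall t : R, 0 <= 0 + 2 * CRe (ip (v - l) k) * t + n2 k * t ^+ 2.
    move=> t.
    have Mlt : M ((- t%:C) *: k + l) by apply: Mlin.
    have := dlb _ Mlt.
    have -> : v - ((- t%:C) *: k + l) = (v - l) + t%:C *: k.
      by rewrite scaleNr opprD opprK addrCA addrC.
    move=> h; have h' : hn (v - l) <= hn (v - l + t%:C *: k) by lra.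
    have : n2 (v - l) <= n2 (v - l + t%:C *: k).
      rewrite -!hn_sqr; have := hn_ge0 (v - l); nra.
    rewrite n2_expand; nra.
  have := @disc R _ _ _ (n2_ge0 k) H.
  have := n2_ge0 k.
  move: (CRe (ip (v - l) k)) => r; nra.
move=> k Mk.
have h1 := orth k Mk.
have h2 := orth _ (MZ 'i%C k Mk).
move: h2; rewrite ipZr.
move: h1; case: (ip (v - l) k) => c1 c2 /= -> /=.
simpc => /= ->.
by [].
Qed.

Lemma hnN x : hn (- x) = hn x.
Proof. by rewrite /hnorm ipNl ipNr opprK. Qed.

Lemma hnZi x : hn ('i%C *: x) = hn x.
Proof.
rewrite /hnorm ipZl ipZr (ipReal x); congr (Num.sqrt _).
by move: (n2 x) => r; simpc.
Qed.

Lemma re_le a b : `|CRe (ip a b)| <= hn a * hn b.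
Proof.
have hp : 0 <= hn a * hn b by rewrite mulr_ge0 // hn_ge0.
have : CRe (ip a b) ^+ 2 <= (hn a * hn b) ^+ 2 by rewrite exprMn !hn_sqr ipCS.
move=> h; rewrite ler_norml; apply/andP; split; nra.
Qed.

Lemma im_le a b : `|CIm (ip a b)| <= hn a * hn b.
Proof.
have := re_le a ('i%C *: b); rewrite hnZi ipZr.
have -> : CRe (('i%C)^*%C * ip a b) = CIm (ip a b).
  by case: (ip a b) => ? ?; simpc.
done.
Qed.

Lemma small0 (r : R) : (forall e, 0 < e -> `|r| < e) -> r = 0.
Proof.
move=> H; apply/eqP; rewrite -normr_le0; apply/ler_addgt0Pr => e e0.
by rewrite add0r ltW // H.
Qed.

Lemma complex0 (z : C) : CRe z = 0 -> CIm z = 0 -> z = 0.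
Proof. by case: z => a b /= -> ->. Qed.

Section Op.
Variable T : V -> V.
Hypothesis Tlin : forall (a : C) x y, T (a *: x + y) = a *: T x + T y.

Lemma T0 : T 0 = 0.
Proof.
have := Tlin 1 0 0; rewrite scale1r addr0 scale1r.
by move/(congr1 (fun w => w - T 0)); rewrite subrr addrK => /esym.
Qed.
Lemma TD x y : T (x + y) = T x + T y.
Proof. by rewrite -[x]scale1r Tlin !scale1r. Qed.
Lemma TZ a x : T (a *: x) = a *: T x.
Proof. by rewrite -[a *: x]addr0 Tlin T0 addr0. Qed.
Lemma TN x : T (- x) = - T x.
Proof. by rewrite -scaleN1r TZ scaleN1r. Qed.
Lemma TB x y : T (x - y) = T x - T y.
Proof. by rewrite TD TN. Qed.
End Op.

Lemma bound_pos (T : V -> V) : (exists K : R, forall x, hn (T x) <= K * hn x) ->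
  exists K : R, 0 < K /\ forall x, hn (T x) <= K * hn x.
Proof.
case=> K HK; exists (`|K| + 1); split; first by rewrite ltr_wpDl.
move=> x; apply: (le_trans (HK x)); apply: ler_wpM2r; first exact: hn_ge0.
by rewrite (le_trans (ler_norm K)) // lerDl.
Qed.

Lemma null_zero x : hn x = 0 -> x = 0.
Proof.
move=> h; apply: ipD; rewrite ipReal -hn_sqr h expr0n /=.
by [].
Qed.

Lemma proj_null (A : V -> V) : is_bounded_op ip A ->
  forall w, exists x, (forall k, A k = 0 -> ip x k = 0) /\
                     forall v, ip (A w - A x) (A v) = 0.
Proof.
case=> Alin /bound_pos [K [K0 HK]] w.
pose N := (fun x : V => A x = 0).
have Mlin : forall (a : C) x y, N x -> N y ->
    N (a *: x + y).
  by rewrite /N => a x y Ax Ay; rewrite Alin Ax Ay scaler0 addr0.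
have Mcl : forall l, (forall e, 0 < e -> exists m, N m /\ hn (m - l) < e) ->
    N l.
  move=> l Hl; rewrite /N; apply: null_zero; apply: small0 => e e0.
  have [m [Am hm]] := Hl (e / K) (divr_gt0 e0 K0).
  have -> : A l = - A (m - l) by rewrite (@TB A Alin) Am sub0r opprK.
  rewrite hnN ger0_norm ?hn_ge0 //.
  apply: (le_lt_trans (HK _)).
  by rewrite -ltr_pdivlMl // mulrC.
have [m [Am Hm]] := @proj N (@T0 A Alin) Mlin Mcl w; exists (w - m); split; first exact: Hm.
by move=> v; rewrite (@TB A Alin) Am subr0 subrr ip0l.
Qed.

Lemma riesz (S : V -> V) : is_bounded_op ip S ->
  forall y, exists w, forall x, ip (S x) y = ip x w.
Proof.
case=> Slin /bound_pos [K [K0 HK]] y.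
pose f x := ip (S x) y.
have flin : forall (a : C) x z, f (a *: x + z) = a * f x + f z.
  by move=> a x z; rewrite /f Slin ipL.
have f0 : f 0 = 0 by rewrite /f (@T0 S Slin) ip0l.
pose N := (fun x : V => f x = 0).
have Mlin : forall (a : C) x z, N x -> N z -> N (a *: x + z).
  by rewrite /N => a x z Ax Az; rewrite flin Ax Az mulr0 addr0.
have Mcl : forall l, (forall e, 0 < e -> exists m, N m /\ hn (m - l) < e) -> N l.
  move=> l Hl; rewrite /N.
  have key : forall e, 0 < e -> exists m, N m /\ hn (S (m - l)) * hn y < e.
    move=> e e0.
    have hy := hn_ge0 y.
    have d0 : 0 < e / (K * (hn y + 1)) by rewrite divr_gt0 // mulr_gt0 // ltr_wpDl.
    have [m [Nm hm]] := Hl _ d0; exists m; split => //.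
    have h1 := HK (m - l).
    have h2 : hn (S (m - l)) <= K * (e / (K * (hn y + 1))).
      by apply: (le_trans h1); rewrite ler_pM2l // ltW.
    have E : K * (e / (K * (hn y + 1))) = e / (hn y + 1).
      by field; rewrite gt_eqF // ?ltr_wpDl // gt_eqF.
    rewrite E in h2.
    have h3 : hn (S (m - l)) * hn y <= e / (hn y + 1) * hn y.
      by rewrite ler_wpM2r.
    apply: (le_lt_trans h3).
    rewrite mulrAC ltr_pdivrMr ?ltr_wpDl //; nra.
  have fl : forall m, N m -> f l = - f (m - l).
    move=> m Nm; rewrite /f (@TB S Slin) ipBl; rewrite /N /f in Nm.
    by rewrite Nm sub0r opprK.
  apply: complex0; apply: small0 => e e0; have [m [Nm hm]] := key e e0;
    rewrite (fl m Nm) /f.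
  - have := re_le (S (m - l)) y.
    case: (ip (S (m - l)) y) => c1 c2 /= h; simpc; rewrite /= normrN; lra.
  - have := im_le (S (m - l)) y.
    case: (ip (S (m - l)) y) => c1 c2 /= h; simpc; rewrite /= normrN; lra.
case: (pselect (exists x0, f x0 <> 0)); last first.
  move=> Hn; exists 0 => x; rewrite ip0r.
  by apply: contrapT => hx; apply: Hn; exists x.
case=> x0 fx0.
have [m [Nm Hm]] := @proj N f0 Mlin Mcl x0.
pose e := x0 - m.
have fB : forall x z, f (x - z) = f x - f z.
  by move=> x z; rewrite /f (@TB S Slin) ipBl.
have fZ : forall a x, f (a *: x) = a * f x.
  by move=> a x; rewrite -[a *: x]addr0 flin f0 addr0.
have fe : f e = f x0 by rewrite /e fB Nm subr0.
have fe0 : f e != 0 by rewrite fe; apply/eqP.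
have iee : ip e e != 0.
  apply/eqP => /ipD h; move: fe0; by rewrite h f0 eqxx.
exists (conjc (f e / ip e e) *: e) => x.
have Nk : N (x - (f x / f e) *: e) by rewrite /N fB fZ mulfVK // subrr.
have := Hm _ Nk; rewrite -/e => h.
have h2 : ip (x - (f x / f e) *: e) e = 0 by rewrite ipC h conj0.
rewrite ipBl ipZl in h2.
have h3 : ip x e = f x / f e * ip e e by apply/eqP; rewrite -subr_eq0 h2.
rewrite ipZr conjK h3 -/(f x); field.
by rewrite fe0 iee.
Qed.

Section Ops.
Variables A S : V -> V.
Hypothesis Abdd : is_bounded_op ip A.
Hypothesis Apos : forall x, 0 <= ip (A x) x.
Hypothesis SBA : in_BA ip A S.

Let Alin := Abdd.1.

Lemma A_sa x y : ip (A x) y = ip x (A y).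
Proof.
have I1 := ger0_Im (Apos (x + y)).
have I2 := ger0_Im (Apos (x + 'i%C *: y)).
have I3 := ger0_Im (Apos x).
have I4 := ger0_Im (Apos y).
move: I1 I2; rewrite !(@TD A Alin) !(@TZ A Alin) !ipDl !ipDr !ipZl !ipZr.
rewrite [ip x (A y)]ipC.
move: I3 I4; case: (ip (A x) x) => a1 a2; case: (ip (A y) y) => b1 b2.
case: (ip (A x) y) => c1 c2; case: (ip (A y) x) => d1 d2 /=.
simpc => /= -> -> h1 h2.
congr (_ +i* _); lra.
Qed.

Lemma adjP u x : ip (S x) (A u) = ip x (adjoint ip S (A u)).
Proof.
have [w Hw] := @riesz S SBA.1 (A u).
have H := @xgetPex _ 0 (fun w => forall x, ip (S x) (A u) = ip x w) (ex_intro _ w Hw).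
exact: H.
Qed.

Lemma A_sharp u : A (asharp ip A S u) = adjoint ip S (A u).
Proof.
case: SBA => _ [Rop [_ HR]].
rewrite /asharp /mp_inverse; set y := adjoint ip S (A u).
have Hy : y = A (Rop u) by rewrite HR.
have [x0 Hx0] := @proj_null A Abdd (Rop u).
case: xgetP => [x _ [_ Hx] | Hn]; last first.
  by exfalso; apply: (Hn x0); rewrite Hy.
pose d := Rop u - x.
have e : y - A x = A d by rewrite Hy /d (@TB A Alin).
have := Hx d; rewrite e => /ipD Ad.
by apply/eqP; rewrite eq_sym -subr_eq0 e Ad.
Qed.

Lemma sharpL u v : ip (A (asharp ip A S u)) v = ip (A u) (S v).
Proof. by rewrite A_sharp [LHS]ipC -adjP -ipC. Qed.

Lemma ipA_ReA z : ip (A (ReA ip A S z)) z = (CRe (ip (A (S z)) z) +i* 0)%C.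
Proof.
rewrite /ReA (@TZ A Alin) (@TD A Alin) ipZl ipDl sharpL (A_sa z (S z)) (ipC (A (S z)) z) inv2.
by case: (ip (A (S z)) z) => a b; simpc => /=; congr (_ +i* _); field.
Qed.

Lemma ipA_ImA z : ip (A (ImA ip A S z)) z = (CIm (ip (A (S z)) z) +i* 0)%C.
Proof.
rewrite /ImA (@TZ A Alin) (@TB A Alin) ipZl ipBl sharpL (A_sa z (S z)) (ipC (A (S z)) z) inv2i.
by case: (ip (A (S z)) z) => a b; simpc => /=; congr (_ +i* _); field.
Qed.

Lemma ipA_SS z : ip (A (asharp ip A S (S z))) z = (CRe (ip (A (S z)) (S z)) +i* 0)%C.
Proof. by rewrite sharpL; case: (@ge0_real _ _ (Apos (S z))) => e _; rewrite {1}e. Qed.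

Lemma ipA_W1 z : ip (A (ReA ip A S z + 'i%C *: asharp ip A S (S z))) z =
  (CRe (ip (A (S z)) z) +i* CRe (ip (A (S z)) (S z)))%C.
Proof.
rewrite (@TD A Alin (ReA ip A S z)) (@TZ A Alin _ (asharp ip A S (S z))) ipDl ipZl ipA_ReA ipA_SS.
by simpc.
Qed.

Lemma ipA_W2 z : ip (A (ImA ip A S z + 'i%C *: asharp ip A S (S z))) z =
  (CIm (ip (A (S z)) z) +i* CRe (ip (A (S z)) (S z)))%C.
Proof.
rewrite (@TD A Alin (ImA ip A S z)) (@TZ A Alin _ (asharp ip A S (S z))) ipDl ipZl ipA_ImA ipA_SS.
by simpc.
Qed.

Let FB := fun x y => ip (A x) y.
Lemma FBL : forall (a : C) (x y z : V), FB (a *: x + y) z = a * FB x z + FB y z.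
Proof. by move=> a x y z; rewrite /FB Alin ipL. Qed.
Lemma FBC : forall x y, FB y x = conjc (FB x y).
Proof. by move=> x y; rewrite /FB A_sa ipC. Qed.
Lemma FBP : forall x, 0 <= FB x x.
Proof. exact: Apos. Qed.

Lemma normA_sqr x : normA ip A x ^+ 2 = CRe (ip (A x) x).
Proof. by rewrite sqr_sqrtr // (@BRe_ge0 R V FB FBP x). Qed.

Lemma cs_A x z : normA ip A z = 1 -> CRe (ip (A x) z) ^+ 2 <= normA ip A x ^+ 2.
Proof.
move=> hz; have := @BRe_CS R V FB FBL FBC FBP x z; rewrite /FB.
by rewrite -!normA_sqr hz expr1n mulr1.
Qed.

Lemma cabs_ge0 (z : C) : 0 <= cabs z.
Proof. exact: sqrtr_ge0. Qed.

Lemma cabsE (a b : R) : cabs (a +i* b)%C = Num.sqrt (a ^+ 2 + b ^+ 2).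
Proof. by []. Qed.

Lemma pointwise z : normA ip A z = 1 ->
  let p := ip (A (S z)) z in let q := CRe (ip (A (S z)) (S z)) in
  [/\ Num.sqrt (cabs (ipA ip A (S z) z) ^+ 2 + normA ip A (S z) ^+ 4) =
        Num.sqrt (CRe p ^+ 2 + CIm p ^+ 2 + q ^+ 2),
      cabs (ipA ip A (ReA ip A S z + 'i%C *: asharp ip A S (S z)) z) =
        Num.sqrt (CRe p ^+ 2 + q ^+ 2),
      cabs (ipA ip A (ImA ip A S z + 'i%C *: asharp ip A S (S z)) z) =
        Num.sqrt (CIm p ^+ 2 + q ^+ 2),
      CRe p ^+ 2 <= normA ip A (ReA ip A S z) ^+ 2 &
      CIm p ^+ 2 <= normA ip A (ImA ip A S z) ^+ 2].
Proof.
move=> hz p q; split.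
- rewrite /ipA -/p (@complexE2 R p) cabsE sqr_sqrtr ?addr_ge0 ?sqr_ge0 //.
  by rewrite -[4%N]/(2 * 2)%N exprM normA_sqr.
- by rewrite /ipA ipA_W1.
- by rewrite /ipA ipA_W2.
- by have := cs_A (ReA ip A S z) z hz; rewrite ipA_ReA.
- by have := cs_A (ImA ip A S z) z hz; rewrite ipA_ImA.
Qed.

Lemma main :
  let W1 := fun z => ReA ip A S z + ('i)%C *: asharp ip A S (S z) in
  let W2 := fun z => ImA ip A S z + ('i)%C *: asharp ip A S (S z) in
  (Order.max (numradA ip A W1) (numradA ip A W2) <= dnumradA ip A S)%E /\
  (dnumradA ip A S <=
     Order.min
       (esqrt (adde (numradA ip A W1 * numradA ip A W1)
                    (opnormA ip A (ImA ip A S) * opnormA ip A (ImA ip A S))))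
       (esqrt (adde (numradA ip A W2 * numradA ip A W2)
                    (opnormA ip A (ReA ip A S) * opnormA ip A (ReA ip A S)))))%E.
Proof.
move=> W1 W2.
have D0 : (0 <= dnumradA ip A S)%E by apply: supA_ge0.
split.
- rewrite ge_max; apply/andP; split.
  + apply: supA_le => // z hz.
    have H := @supA_ub R V ip A (fun z => Num.sqrt (cabs (ipA ip A (S z) z) ^+ 2 + normA ip A (S z) ^+ 4)) z hz.
    apply: (le_trans _ H); rewrite lee_fin /=.
    have [e1 e2 e3 _ _] := pointwise z hz.
    rewrite /W1 e2 e1 ler_sqrt ?addr_ge0 ?sqr_ge0 //.
    by rewrite lerD2r lerDl sqr_ge0.
  + apply: supA_le => // z hz.
    have H := @supA_ub R V ip A (fun z => Num.sqrt (cabs (ipA ip A (S z) z) ^+ 2 + normA ip A (S z) ^+ 4)) z hz.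
    apply: (le_trans _ H); rewrite lee_fin /=.
    have [e1 e2 e3 _ _] := pointwise z hz.
    rewrite /W2 e3 e1 ler_sqrt ?addr_ge0 ?sqr_ge0 //.
    by rewrite lerD2r lerDr sqr_ge0.
- rewrite le_min; apply/andP; split.
  + apply: supA_le; first exact: esqrt_ge0.
    move=> z hz; have [e1 e2 e3 e4 e5] := pointwise z hz.
    have H1 := @supA_ub R V ip A (fun z => cabs (ipA ip A (W1 z) z)) z hz.
    have H2 := @supA_ub R V ip A (fun z => normA ip A (ImA ip A S z)) z hz.
    apply: (@esq_bound R _ _ _ _ _ (cabs_ge0 _) (sqrtr_ge0 _) H1 H2) => /=.
    rewrite /W1 e1 e2 sqr_sqrtr ?addr_ge0 ?sqr_ge0 // ler_sqrt ?addr_ge0 ?sqr_ge0 //.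
    move: e5; rewrite /normA; lra.
  + apply: supA_le; first exact: esqrt_ge0.
    move=> z hz; have [e1 e2 e3 e4 e5] := pointwise z hz.
    have H1 := @supA_ub R V ip A (fun z => cabs (ipA ip A (W2 z) z)) z hz.
    have H2 := @supA_ub R V ip A (fun z => normA ip A (ReA ip A S z)) z hz.
    apply: (@esq_bound R _ _ _ _ _ (cabs_ge0 _) (sqrtr_ge0 _) H1 H2) => /=.
    rewrite /W2 e1 e3 sqr_sqrtr ?addr_ge0 ?sqr_ge0 // ler_sqrt ?addr_ge0 ?sqr_ge0 //.
    move: e4; rewrite /normA; lra.
Qed.

End Ops.

End Hilb.

Theorem theorem2p7 (R : realType) (V : lmodType R[i]) (ip : V -> V -> R[i])
  (A S : V -> V) :
  is_complex_hilbert ip ->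
  is_positive_op ip A ->
  in_BA ip A S ->
  let W1 := fun z => ReA ip A S z + ('i)%C *: asharp ip A S (S z) in
  let W2 := fun z => ImA ip A S z + ('i)%C *: asharp ip A S (S z) in
  (Order.max (numradA ip A W1) (numradA ip A W2) <= dnumradA ip A S)%E /\
  (dnumradA ip A S <=
     Order.min
       (esqrt (adde (numradA ip A W1 * numradA ip A W1)
                    (opnormA ip A (ImA ip A S) * opnormA ip A (ImA ip A S))))
       (esqrt (adde (numradA ip A W2 * numradA ip A W2)
                    (opnormA ip A (ReA ip A S) * opnormA ip A (ReA ip A S)))))%E.
Proof.
move=> [ipL ipC ipP ipD ipComp] [Abdd Apos] SBA.
exact: (@main R V ip ipL ipC ipP ipD ipComp A S Abdd Apos SBA).
Qed.
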